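(* Let $\gamma$ be a gauge on $\mathbb{R}^d$ with skewness $\sigma$, and let $v\in\mathbb{R}^d$ with $\gamma(v)=1$. Then $v\in \mathrm{SD}_\gamma$ if and only if $-\frac{1}{\sigma}\,\partial\gamma(v)\subseteq\partial\gamma(-v)$.
   Context: A gauge $\gamma$ on $\mathbb{R}^d$ is the Minkowski functional of a convex compact set $B_\gamma=\{x:\gamma(x)\le 1\}$ having the origin in its interior; it is positive except at $0$, positively homogeneous, and subadditive, but not necessarily symmetric. The dual gauge is $\gamma^\circ(p)=\max\{\langle p,x\rangle:\gamma(x)=1\}$, with unit ball $B_{\gamma^\circ}$ and boundary $\partial B_{\gamma^\circ}=\{p:\gamma^\circ(p)=1\}$. For $x\neq 0$, the subdifferential is $\partial\gamma(x)=\{p\in\partial B_{\gamma^\circ}:\langle p,x\rangle=\gamma(x)\}$ (and $\partial\gamma(0)=B_{\gamma^\circ}$). The skewness of $\gamma$ is $\sigma=\sup_{x\neq 0}\gamma(x)/\gamma(-x)$ (so $\sigma\ge 1$, with equality iff $\gamma$ is a norm). The set of skewness directions is $\mathrm{SD}_\gamma=\{v\in\mathbb{R}^d:\gamma(v)=\sigma\,\gamma(-v)=1\}$. *)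

(* Defs.v *)
From HB Require Import structures.
From mathcomp Require Import all_boot all_order all_algebra.
From mathcomp Require Import all_classical all_reals all_analysis.
Set Implicit Arguments. Unset Strict Implicit. Unset Printing Implicit Defensive.
Import Order.TTheory GRing.Theory Num.Theory.
Import numFieldNormedType.Exports.
Local Open Scope classical_set_scope.
Local Open Scope ring_scope.

Section Gauge.
Variables (R : realType) (d : nat).
Local Notation V := 'rV[R]_d.

Definition dotp (p x : V) : R := \sum_(i < d) p ord0 i * x ord0 i.

Definition convex_setR (B : set V) : Prop :=
  forall x y (t : R), 0 <= t -> t <= 1 -> B x -> B y -> B (t *: x + (1 - t) *: y).

Definition minkowski (B : set V) (x : V) : R :=
  inf [set t : R | 0 < t /\ B (t^-1 *: x)].

Definition is_gauge (gamma : V -> R) : Prop :=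
  exists B : set V, [/\ convex_setR B, compact B, B^° 0
                      & forall x, gamma x = minkowski B x].

(* dual gauge: gamma°(p) = max { <p,x> : gamma(x) = 1 } (max written as sup;
   the maximum is attained by compactness) *)
Definition dual_gauge (gamma : V -> R) (p : V) : R :=
  sup [set dotp p x | x in [set x | gamma x = 1]].

Definition subdiff (gamma : V -> R) (x : V) : set V :=
  if x == 0 then [set p | dual_gauge gamma p <= 1]
  else [set p | dual_gauge gamma p = 1 /\ dotp p x = gamma x].

Definition skewness (gamma : V -> R) : R :=
  sup [set gamma x / gamma (- x) | x in [set x : V | x != 0]].

Definition SD (gamma : V -> R) : set V :=
  [set v | gamma v = 1 /\ skewness gamma * gamma (- v) = 1].

End Gauge.

(* Main.v *)
Require Import Defs.
From HB Require Import structures.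
From mathcomp Require Import all_boot all_order all_algebra.
From mathcomp Require Import all_classical all_reals all_analysis.
From mathcomp Require Import lra ring.
Import Order.TTheory GRing.Theory Num.Theory.
Import numFieldNormedType.Exports.
Local Open Scope classical_set_scope.
Local Open Scope ring_scope.

Section HB.
Variables (R : realType) (d : nat).
Local Notation V := 'rV[R]_d.

Definition sublin (g : V -> R) := [/\ g 0 = 0,
  forall c x, 0 < c -> g (c *: x) = c * g x &
  forall x y, g (x + y) <= g x + g y].

Definition qd (g : V -> R) u y t := (g (u + t *: y) - g u) / t.
Definition Dd (g : V -> R) u y := inf [set qd g u y t | t in [set t : R | 0 < t]].

Variable g : V -> R.
Hypothesis gs : sublin g.

Lemma hom0 c x : 0 <= c -> g (c *: x) = c * g x.
Proof.
case: gs => g0 gh _; rewrite le_eqVlt => /orP [/eqP <-|]; last exact: gh.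
by rewrite scale0r mul0r g0.
Qed.

Lemma qd_lb u y t : 0 < t -> - g (- y) <= qd g u y t.
Proof.
case: gs => g0 gh gsub => t0; rewrite /qd ler_pdivlMr //.
have := gsub (u + t *: y) (t *: - y).
rewrite gh // scalerN addrK => H; lra.
Qed.

Lemma Dd_le u y t : 0 < t -> Dd g u y <= qd g u y t.
Proof.
move=> t0; apply: ge_inf; last by exists t.
exists (- g (- y)) => _ [s s0 <-]; exact: qd_lb.
Qed.

Lemma Dd_ge u y c : (forall t, 0 < t -> c <= qd g u y t) -> c <= Dd g u y.
Proof.
move=> H; apply: lb_le_inf; first by exists (qd g u y 1), 1 => //=.
by move=> _ [s s0 <-]; exact: H.
Qed.

Lemma Dd_le_g u y : Dd g u y <= g y.
Proof.
case: gs => g0 gh gsub.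
apply: (le_trans (Dd_le u y 1 ltr01)); rewrite /qd divr1 scale1r.
have := gsub u y; lra.
Qed.

Lemma qd_mono u y s t : 0 < s -> s <= t -> qd g u y s <= qd g u y t.
Proof.
case: gs => g0 gh gsub => s0 st.
have t0 : 0 < t by apply: lt_le_trans st.
have H : u + s *: y = (s / t) *: (u + t *: y) + (1 - s / t) *: u.
  rewrite scalerDr scalerA scalerBl scale1r.
  have -> : s / t * t = s by field; rewrite gt_eqF.
  by rewrite [RHS]addrC addrA subrK.
have H2 := gsub ((s / t) *: (u + t *: y)) ((1 - s / t) *: u).
rewrite -H gh ?divr_gt0 // hom0 in H2; last first.
  by rewrite subr_ge0 ler_pdivrMr // mul1r.
rewrite /qd ler_pdivrMr // mulrAC ler_pdivlMr //.
rewrite mulrC.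
have E : t * (g (u + s *: y) - g u) <= s * (g (u + t *: y) - g u).
  rewrite -ler_pdivlMl // mulrA (mulrC t^-1) mulrBr.
  move: H2; rewrite mulrBl mul1r; lra.
by rewrite [X in _ <= X]mulrC.
Qed.

Lemma Dd0 u : Dd g u 0 = 0.
Proof.
have q0 t : qd g u 0 t = 0 by rewrite /qd scaler0 addr0 subrr mul0r.
apply/le_anti/andP; split.
  by have := Dd_le u 0 1 ltr01; rewrite q0.
by apply: Dd_ge => t _; rewrite q0.
Qed.

Lemma qd_scale u y c t : 0 < c -> 0 < t ->
  qd g u (c *: y) t = c * qd g u y (c * t).
Proof.
move=> c0 t0; rewrite /qd scalerA (mulrC t c).
by field; apply/andP; split; rewrite gt_eqF.
Qed.

Lemma Dd_hom u c y : 0 < c -> Dd g u (c *: y) = c * Dd g u y.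
Proof.
move=> c0; apply/le_anti/andP; split.
  rewrite -ler_pdivrMl //; apply: Dd_ge => t t0.
  rewrite ler_pdivrMl //.
  have := Dd_le u (c *: y) (t / c) (divr_gt0 t0 c0).
  rewrite qd_scale ?divr_gt0 //.
  by have -> : c * (t / c) = t by field; rewrite gt_eqF.
apply: Dd_ge => t t0; rewrite qd_scale // ler_pM2l //.
by apply: Dd_le; rewrite mulr_gt0.
Qed.

Lemma Dd_sub u y z : Dd g u (y + z) <= Dd g u y + Dd g u z.
Proof.
case: gs => g0 gh gsub.
suff : Dd g u (y + z) - Dd g u z <= Dd g u y by lra.
apply: Dd_ge => s1 s10; suff : Dd g u (y + z) - qd g u y s1 <= Dd g u z by lra.
apply: Dd_ge => s2 s20; suff : Dd g u (y + z) <= qd g u y s1 + qd g u z s2 by lra.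
set m := Num.min s1 s2.
have m0 : 0 < m by rewrite lt_min s10 s20.
have m1 : m <= s1 by rewrite ge_min lexx.
have m2 : m <= s2 by rewrite ge_min lexx orbT.
apply: (le_trans (Dd_le u (y + z) (m / 2) (divr_gt0 m0 (ltr0Sn _ 1)))).
apply: le_trans; last exact: (lerD (qd_mono u y _ _ m0 m1) (qd_mono u z _ _ m0 m2)).
have E : u + (m / 2) *: (y + z) = 2^-1 *: (u + m *: y) + 2^-1 *: (u + m *: z).
  rewrite !scalerDr !scalerA addrACA -scalerDl.
  congr (_ + _); last by rewrite (mulrC m).
  have -> : (2^-1 + 2^-1 : R) = 1 by field.
  by rewrite scale1r.
have H := gsub (2^-1 *: (u + m *: y)) (2^-1 *: (u + m *: z)).
rewrite -E !gh ?invr_gt0 // in H.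
rewrite /qd.
have -> : (g (u + (m / 2) *: (y + z)) - g u) / (m / 2) =
   (2 * (g (u + (m / 2) *: (y + z)) - g u)) / m.
  by field; rewrite gt_eqF.
rewrite -mulrDl ler_pM2r ?invr_gt0 //; lra.
Qed.

Lemma Dd_sublin u : sublin (Dd g u).
Proof.
split; [exact: Dd0| move=> c x c0; exact: Dd_hom | exact: Dd_sub].
Qed.

Lemma Dd_negu u : Dd g u (- u) <= - g u.
Proof.
case: gs => g0 gh gsub.
have h2 : (0:R) < 2^-1 by rewrite invr_gt0 ltr0Sn.
apply: (le_trans (Dd_le u (- u) (2^-1) h2)).
rewrite /qd scalerN.
have -> : u - 2^-1 *: u = 2^-1 *: u.
  by rewrite -{1}(scale1r u) -scalerBl; congr (_ *: _); field.
rewrite gh ?invr_gt0 //.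
have -> : (2^-1 * g u - g u) / 2^-1 = - g u by field.
by [].
Qed.

Lemma Dd_lin u w : g w + g (- w) = 0 -> Dd g u w + Dd g u (- w) = 0.
Proof.
move=> H; apply/le_anti/andP; split.
  have := Dd_le_g u w; have := Dd_le_g u (- w); lra.
by have := Dd_sub u w (- w); rewrite subrr Dd0.
Qed.

Lemma Dd_linu u : Dd g u u + Dd g u (- u) = 0.
Proof.
apply/le_anti/andP; split.
  have := Dd_le_g u u; have := Dd_negu u; lra.
by have := Dd_sub u u (- u); rewrite subrr Dd0.
Qed.
End HB.
Section HB2.
Variables (R : realType) (d : nat).
Local Notation V := 'rV[R]_d.

Definition lin_along (h : V -> R) w := h w + h (- w) = 0.
Arguments sublin {R d}.
Arguments qd {R d}.
Arguments Dd {R d}.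

Lemma lin_hom h w c : sublin h -> lin_along h w -> h (c *: w) = c * h w.
Proof.
move=> hs hw; have [c0|c0] := leP 0 c; first exact: (@hom0 _ _ _ hs).
have -> : c *: w = (- c) *: (- w) by rewrite scaleNr scalerN opprK.
rewrite (@hom0 _ _ _ hs) //; last by rewrite oppr_ge0 ltW.
move: hw; rewrite /lin_along => hw.
have -> : h (- w) = - h w by lra.
by rewrite mulrNN.
Qed.

Lemma sublin_sum h (F : 'I_d -> V) : sublin h ->
  h (\sum_i F i) <= \sum_i h (F i).
Proof.
case=> h0 hh hsub.
apply: (big_ind2 (fun a b => h a <= b)); first by rewrite h0.
  by move=> x1 x2 y1 y2 H1 H2; apply: (le_trans (hsub _ _)); apply: lerD.
by [].
Qed.

Lemma sublin_linear h : sublin h -> (forall i, lin_along h (delta_mx 0 i)) ->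
  forall x, h x = dotp (\row_i h (delta_mx 0 i)) x.
Proof.
move=> hs hl x.
have E (y : V) : \sum_i h (y 0 i *: delta_mx 0 i) = dotp (\row_i h (delta_mx 0 i)) y.
  rewrite /dotp; apply: eq_bigr => i _; rewrite lin_hom // mxE mulrC //.
have H1 := sublin_sum h (fun i => x 0 i *: delta_mx 0 i) hs.
have H2 := sublin_sum h (fun i => (- x) 0 i *: delta_mx 0 i) hs.
rewrite -!row_sum_delta E in H1.
rewrite -!row_sum_delta E in H2.
have E2 : dotp (\row_i h (delta_mx 0 i)) (- x) = - dotp (\row_i h (delta_mx 0 i)) x.
  rewrite /dotp -sumrN; apply: eq_bigr => i _; rewrite !mxE mulrN //.
case: hs => h0 _ hsub.
have := hsub x (- x); rewrite subrr h0 E2 in H2 *; lra.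
Qed.

Definition iterD (g0 : V -> R) (s : seq V) := foldr (fun u g => Dd g u) g0 s.

Lemma iterD_prop g0 s : sublin g0 ->
  [/\ sublin (iterD g0 s), (forall y, iterD g0 s y <= g0 y) &
      forall w, w \in s -> lin_along (iterD g0 s) w].
Proof.
move=> g0s; elim: s => [|u s [IHs IHle IHl]] /=.
  by split => // y.
split; first exact: Dd_sublin.
  by move=> y; apply: le_trans (IHle y); apply: Dd_le_g.
move=> w; rewrite in_cons => /orP [/eqP ->|ws].
  exact: Dd_linu.
by apply: Dd_lin => //; apply: IHl.
Qed.

Lemma subgrad (G : V -> R) v : sublin G ->
  exists p, (forall y, dotp p y <= G y) /\ dotp p v = G v.
Proof.
move=> Gs.
set g0 := Dd G v.
have g0s : sublin g0 by exact: Dd_sublin.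
set es := [seq (delta_mx 0 i : V) | i <- enum 'I_d].
set h := iterD g0 es.
have [hs hle hl] := iterD_prop g0 es g0s.
have hlin := @sublin_linear h hs (fun i => hl _ (map_f _ (mem_enum _ i))).
exists (\row_i h (delta_mx 0 i)); split.
  move=> y; rewrite -hlin; apply: le_trans (hle y) _; exact: Dd_le_g.
rewrite -hlin; apply/le_anti/andP; split.
  by apply: le_trans (hle v) _; exact: Dd_le_g.
have := @Dd_negu _ _ _ Gs v; have := hle (- v).
case: hs => h0 _ hsub; have := hsub v (- v); rewrite subrr h0.
rewrite /h /g0; lra.
Qed.
End HB2.

Section S.
Variables (R : realType) (d : nat).
Local Notation V := 'rV[R]_d.
Variable B : set V.
Hypothesis Bcv : convex_setR B.
Hypothesis Bc : compact B.
Hypothesis B0 : B^° 0.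
Lemma ballB : exists2 r : R, 0 < r & forall x : V, `|x| < r -> B x.
Proof.
have /nbhs_ballP [r r0 H] : nbhs (0:V) B by [].
exists r => // x xr; apply: H; rewrite -ball_normE /= sub0r normrN //.
Qed.
Lemma boundB : exists2 M : R, 0 < M & forall x : V, B x -> `|x| <= M.
Proof.
have [M0 [M0r HM]] := compact_bounded Bc.
exists (Num.max M0 0 + 1).
  by rewrite ltr_pwDr // le_max lexx orbT.
move=> x Bx; apply: (HM (Num.max M0 0 + 1)) => //.
rewrite ltr_pwDr // le_max lexx //.
Qed.
Let S (x : V) := [set t : R | 0 < t /\ B (t^-1 *: x)].
Let g := @Defs.minkowski R d B.
Lemma S_ne x : S x !=set0.
Proof.
have [r r0 Hr] := ballB.
have n0 := normr_ge0 x.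
have t0 : 0 < (`|x| + 1) / r * 2.
  by apply: mulr_gt0 => //; apply: divr_gt0 => //; lra.
exists ((`|x| + 1) / r * 2); split => //.
apply: Hr; rewrite normrZ normfV (gtr0_norm t0) mulrC ltr_pdivrMr //.
rewrite mulrA mulrCA divff ?gt_eqF // mulr1; lra.
Qed.
Lemma S_lb x : has_lbound (S x).
Proof. by exists 0 => t [/ltW]. Qed.
Lemma g_le x t : S x t -> g x <= t.
Proof. by move=> St; apply: ge_inf => //; apply: S_lb. Qed.
Lemma g_ge x c : (forall t, S x t -> c <= t) -> c <= g x.
Proof. by move=> H; apply: lb_le_inf => //; apply: S_ne. Qed.
Lemma g_ge0 x : 0 <= g x.
Proof. by apply: g_ge => t [/ltW]. Qed.
Lemma g_homle c x : 0 < c -> g (c *: x) <= c * g x.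
Proof.
move=> c0; rewrite -ler_pdivrMl //; apply: g_ge => t [t0 Bt].
rewrite ler_pdivrMl //; apply: g_le; split; first by rewrite mulr_gt0.
rewrite scalerA; suff -> : (c * t)^-1 * c = t^-1 by [].
by rewrite invfM mulrAC mulVf ?gt_eqF // mul1r.
Qed.
Lemma g_hom c x : 0 < c -> g (c *: x) = c * g x.
Proof.
move=> c0; apply/le_anti; rewrite g_homle //=.
have := g_homle (c^-1) (c *: x); rewrite invr_gt0 c0 scalerA mulVf ?gt_eqF //.
by rewrite scale1r => /(_ isT); rewrite ler_pdivlMl.
Qed.
Lemma g0 : g 0 = 0.
Proof.
have := g_hom 2 (0 : V); rewrite scaler0 => /(_ (ltr0Sn _ 1)) H; lra.
Qed.
Lemma g_sub x y : g (x + y) <= g x + g y.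
Proof.
suff : g (x + y) - g y <= g x by lra.
apply: g_ge => t [t0 Bt]; suff : g (x + y) - t <= g y by lra.
apply: g_ge => s [s0 Bs]; suff : g (x + y) <= t + s by lra.
have st0 : 0 < t + s by rewrite addr_gt0.
apply: g_le; split => //.
have := @Bcv _ _ (t / (t + s)).
suff -> : (t + s)^-1 *: (x + y) =
  (t / (t + s)) *: (t^-1 *: x) + (1 - t / (t + s)) *: (s^-1 *: y).
  apply => //; first by rewrite divr_ge0 ?ltW.
  by rewrite ler_pdivrMr // mul1r lerDl ltW.
rewrite !scalerA scalerDr; congr (_ *: _ + _ *: _).
  by field; apply/andP; split; rewrite gt_eqF.
by field; apply/andP; split; rewrite gt_eqF.
Qed.
Lemma g_pos x : x != 0 -> 0 < g x.
Proof.
move=> x0; have [M M0 HM] := boundB.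
apply: (@lt_le_trans _ _ (`|x| / M)); first by rewrite divr_gt0 // normr_gt0.
apply: g_ge => t [t0 /HM]; rewrite normrZ normfV gtr0_norm //.
by rewrite mulrC ler_pdivrMr // ler_pdivrMr // mulrC.
Qed.
Lemma g_sublin : @sublin R d g.
Proof. by split; [exact: g0 | move=> c x c0; exact: g_hom | exact: g_sub]. Qed.
End S.

Section Main.
Variables (R : realType) (d : nat).
Local Notation V := 'rV[R]_d.

Lemma dotpZr (p y : V) c : dotp p (c *: y) = c * dotp p y.
Proof. by rewrite /dotp mulr_sumr; apply: eq_bigr => i _; rewrite !mxE mulrCA. Qed.
Lemma dotpZl (p y : V) c : dotp (c *: p) y = c * dotp p y.
Proof. by rewrite /dotp mulr_sumr; apply: eq_bigr => i _; rewrite !mxE mulrA. Qed.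
Lemma dotpNr (p y : V) : dotp p (- y) = - dotp p y.
Proof. by rewrite -scaleN1r dotpZr mulN1r. Qed.
Lemma dotp0r (p : V) : dotp p 0 = 0.
Proof. by rewrite -(scale0r (0 : V)) dotpZr mul0r. Qed.

Arguments sublin {R d}.
Variable gam : V -> R.
Hypothesis gs : sublin gam.
Hypothesis gpos : forall x, x != 0 -> 0 < gam x.

Lemma dual_ub p : dual_gauge gam p = 1 -> forall y, dotp p y <= gam y.
Proof.
move=> dp y.
set S := [set dotp p x | x in [set x | gam x = 1]].
have hS : has_sup S.
  apply/not_notP => nh; move: dp; rewrite /dual_gauge -/S sup_out //.
  by move/eqP; rewrite eq_sym oner_eq0.
have [->|y0] := eqVneq y 0; first by case: gs => g0 _ _; rewrite dotp0r g0.
have gy := gpos _ y0.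
have H : S (dotp p ((gam y)^-1 *: y)).
  exists ((gam y)^-1 *: y) => //=.
  by case: gs => _ gh _; rewrite gh ?invr_gt0 // mulVf // gt_eqF.
have := ub_le_sup hS.2 H; rewrite -/S.
rewrite /dual_gauge -/S in dp; rewrite dp dotpZr ler_pdivrMl // mulr1 //.
Qed.

Lemma dual_eq p : (forall y, gam y = 1 -> dotp p y <= 1) ->
  (exists y, gam y = 1 /\ dotp p y = 1) -> dual_gauge gam p = 1.
Proof.
move=> hub [y [gy py]]; rewrite /dual_gauge.
have ne : [set dotp p x | x in [set x | gam x = 1]] !=set0.
  by exists (dotp p y), y.
have ub : ubound [set dotp p x | x in [set x | gam x = 1]] 1.
  by move=> _ [x /= gx <-]; exact: hub.
apply/le_anti/andP; split; first exact: ge_sup.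
rewrite -{1}py; apply: (ub_le_sup (ex_intro _ 1 ub)); by exists y.
Qed.
End Main.

Arguments sublin {R d}.
Arguments Dd {R d}.
Theorem mainTheorem1 (R : realType) (d : nat) (gamma : 'rV[R]_d -> R)
  (v : 'rV[R]_d) :
  is_gauge gamma -> gamma v = 1 ->
  (SD gamma v <->
   (fun p => - (skewness gamma)^-1 *: p) @` subdiff gamma v `<=` subdiff gamma (- v)).
Proof.
move=> [B [Bcv Bc B0 gE]] gv.
have gs : sublin gamma.
  have -> : gamma = Defs.minkowski B by apply: funext.
  exact: g_sublin.
have gpos x : x != 0 -> 0 < gamma x.
  by move=> x0; rewrite gE; apply: g_pos.
case: (gs) => g0 gh gsub.
have v0 : v != 0 by apply/eqP => v0; move: gv; rewrite v0 g0 => /eqP; rewrite eq_sym oner_eq0.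
have nv0 : - v != 0 by rewrite oppr_eq0.
have gnv := gpos _ nv0.
have sdv : subdiff gamma v = [set p | dual_gauge gamma p = 1 /\ dotp p v = gamma v].
  by rewrite /subdiff (negbTE v0).
have sdnv : subdiff gamma (- v) = [set p | dual_gauge gamma p = 1 /\ dotp p (- v) = gamma (- v)].
  by rewrite /subdiff (negbTE nv0).
set s := skewness gamma.
split.
- move=> [_ Hs]; rewrite -/s in Hs.
  have s0 : 0 < s.
    rewrite ltNge; apply/negP => sl0.
    have : s * gamma (- v) <= 0 by rewrite mulr_le0_ge0 // ltW.
    by rewrite Hs ler10.
  have sn0 : s != 0 by rewrite gt_eqF.
  have gnvE : gamma (- v) = s^-1.
    by apply: (mulfI sn0); rewrite Hs mulfV.
  have Sb : forall y, gamma y = 1 -> gamma (- y) <= s.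
    move=> y gy.
    set T := [set gamma x / gamma (- x) | x in [set x : 'rV[R]_d | x != 0]].
    have hT : has_sup T.
      apply/not_notP => nh; move: s0; rewrite /s /skewness -/T sup_out //.
      by rewrite ltxx.
    have y0 : - y != 0.
      by rewrite oppr_eq0; apply/eqP => y0; move: gy; rewrite y0 g0 => /eqP; rewrite eq_sym oner_eq0.
    have := ub_le_sup hT.2 (ex_intro2 _ _ (- y) y0 erefl).
    by rewrite opprK gy divr1.
  move=> _ [p Hp <-]; rewrite sdv in Hp; case: Hp => dp pv.
  rewrite sdnv; split.
    apply: dual_eq.
    + move=> y gy; rewrite dotpZl mulNr -mulrN -dotpNr.
      have H2 := @dual_ub _ _ gamma gs gpos p dp (- y); have H1 := Sb y gy.
      have si : 0 <= s^-1 by rewrite invr_ge0 ltW.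
      by apply: (le_trans (ler_wpM2l si (le_trans H2 H1))); rewrite mulVf.
    + exists (s *: (- v)); split; first by rewrite gh // gnvE mulfV.
      by rewrite dotpZl dotpZr dotpNr pv gv mulrN mulr1 mulrNN mulVf.
  by rewrite dotpZl dotpNr pv gv mulrNN mulr1 gnvE.
- move=> H; split => //.
  have [p [pub pv]] := @subgrad _ _ gamma v gs.
  have psd : subdiff gamma v p.
    rewrite sdv; split => //; apply: dual_eq.
      by move=> y gy; rewrite -gy; apply: pub.
    by exists v; rewrite pv.
  have := H _ (ex_intro2 _ _ p psd erefl); rewrite sdnv => -[_].
  rewrite dotpZl dotpNr pv gv mulrNN mulr1 => sE.
  rewrite -sE mulfV //; apply/eqP => s0; move: gnv; rewrite -sE /s s0 invr0 ltxx //.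
Qed.
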